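(* Let $T$ be a complete theory and suppose the formula $\theta(x;y)$ has the $\infty$-compatible order property. Then the formula $\varphi(x;y,z):=\theta(x;y)\wedge\neg\theta(x;z)$ has $SOP_3$.
   Context: Work in a sufficiently saturated model of $T$. The characteristic sequence of $\theta$ is $P_n(y_1,\dots,y_n):=\exists x\bigwedge_{i\le n}\theta(x;y_i)$. $\theta$ has the $\infty$-compatible order property if there exist $\langle a_i,b_i:i<\omega\rangle$ such that for all $m<\omega$ and all indices, $P_{2m}(a_{i_1},b_{j_1},\dots,a_{i_m},b_{j_m})$ holds iff $\max\{i_1,\dots,i_m\}<\min\{j_1,\dots,j_m\}$. A formula $\varphi(x;w)$ has $SOP_3$ if there are a formula $\psi(x;w)$, an indiscernible sequence $\langle \bar a_i:i<\omega\rangle$ and $\langle c_j:j<\omega\rangle$ such that: (1) $\{\varphi(x;w),\psi(x;w)\}$ is contradictory; (2) $\varphi(c_j;\bar a_i)$ for $i\le j$ and $\psi(c_j;\bar a_i)$ for $i>j$; (3) for $i<j$, $\{\varphi(x;\bar a_j),\psi(x;\bar a_i)\}$ is contradictory. In particular $T$ then has $SOP_3$. *)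

(* Defs.v *)
From mathcomp Require Import all_boot.
Set Implicit Arguments. Unset Strict Implicit. Unset Printing Implicit Defensive.

Record signature := Signature {
  fsym : Type; rsym : Type;
  farity : fsym -> nat; rarity : rsym -> nat }.

Section FOL.
Variable L : signature.

Inductive term : Type :=
  | tvar : nat -> term
  | tapp : forall f : fsym L, ('I_(@farity L f) -> term) -> term.

(* de Bruijn formulas: [fex]/[fall] bind variable 0 *)
Inductive formula : Type :=
  | fbot : formula
  | feq : term -> term -> formula
  | frel : forall r : rsym L, ('I_(@rarity L r) -> term) -> formula
  | fneg : formula -> formula
  | fand : formula -> formula -> formula
  | for_ : formula -> formula -> formula
  | fimp : formula -> formula -> formula
  | fex : formula -> formula
  | fall : formula -> formula.

Record structure := Structure {
  dom :> Type;
  inh : dom;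
  interp_f : forall f : fsym L, ('I_(@farity L f) -> dom) -> dom;
  interp_r : forall r : rsym L, ('I_(@rarity L r) -> dom) -> Prop }.

Definition scons {A : Type} (a : A) (e : nat -> A) : nat -> A :=
  fun i => match i with 0 => a | j.+1 => e j end.

Fixpoint eval_term (M : structure) (e : nat -> M) (t : term) : M :=
  match t with
  | tvar i => e i
  | tapp f ts => @interp_f M f (fun i => eval_term e (ts i))
  end.

Fixpoint sat (M : structure) (e : nat -> M) (phi : formula) : Prop :=
  match phi with
  | fbot => False
  | feq t1 t2 => eval_term e t1 = eval_term e t2
  | frel r ts => @interp_r M r (fun i => eval_term e (ts i))
  | fneg p => ~ sat e p
  | fand p q => sat e p /\ sat e q
  | for_ p q => sat e p \/ sat e q
  | fimp p q => sat e p -> sat e q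
  | fex p => exists a : M, sat (scons a e) p
  | fall p => forall a : M, sat (scons a e) p
  end.

Fixpoint term_below (N : nat) (t : term) : Prop :=
  match t with
  | tvar i => i < N
  | tapp f ts => forall i, term_below N (ts i)
  end.

Fixpoint formula_below (N : nat) (phi : formula) : Prop :=
  match phi with
  | fbot => True
  | feq t1 t2 => term_below N t1 /\ term_below N t2
  | frel r ts => forall i, term_below N (ts i)
  | fneg p => formula_below N p
  | fand p q | for_ p q | fimp p q => formula_below N p /\ formula_below N q
  | fex p | fall p => formula_below N.+1 p
  end.

Definition up (s : nat -> nat) : nat -> nat :=
  fun i => match i with 0 => 0 | j.+1 => (s j).+1 end.

Fixpoint rename_term (s : nat -> nat) (t : term) : term :=
  match t with
  | tvar i => tvar (s i)
  | tapp f ts => tapp (fun i => rename_term s (ts i))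
  end.

Fixpoint rename (s : nat -> nat) (phi : formula) : formula :=
  match phi with
  | fbot => fbot
  | feq t1 t2 => feq (rename_term s t1) (rename_term s t2)
  | frel r ts => frel (fun i => rename_term s (ts i))
  | fneg p => fneg (rename s p)
  | fand p q => fand (rename s p) (rename s q)
  | for_ p q => for_ (rename s p) (rename s q)
  | fimp p q => fimp (rename s p) (rename s q)
  | fex p => fex (rename (up s) p)
  | fall p => fall (rename (up s) p)
  end.

Definition tup_env (M : structure) (n : nat) (x : 'I_n -> M) (rest : nat -> M)
  : nat -> M :=
  fun i => match (insub i : option 'I_n) with
           | Some j => x j
           | None => rest (i - n)
           end.

Definition default_env (M : structure) : nat -> M := fun _ => @inh M.

(* A partitioned formula phi(x; w) with |x| = n, |w| = m: variables 0..n-1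
   are x, variables n..n+m-1 are w. *)
Definition holds (M : structure) (n m : nat) (phi : formula)
  (x : 'I_n -> M) (w : 'I_m -> M) : Prop :=
  sat (tup_env x (tup_env w (default_env M))) phi.

Definition cat_env (M : structure) (m : nat) (s : seq ('I_m -> M)) : nat -> M :=
  foldr (fun a r => tup_env a r) (default_env M) s.

(** Indiscernible sequence (over the empty set) of m-tuples *)
Definition indiscernible (M : structure) (m : nat) (a : nat -> ('I_m -> M)) :=
  forall (chi : formula) (s t : seq nat),
    size s = size t -> sorted ltn s -> sorted ltn t ->
    formula_below (size s * m) chi ->
    (sat (cat_env (map a s)) chi <-> sat (cat_env (map a t)) chi).

(** aleph_1-saturation: every finitely satisfiable set of formulas in
    finitely many variables x (variables 0..n-1) over a countable set of
    parameters (the range of p, placed at variables n, n+1, ...) is realized. *)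
Definition aleph1_saturated (M : structure) :=
  forall (n : nat) (p : nat -> M) (Sigma : formula -> Prop),
    (forall (r : nat) (chis : 'I_r -> formula),
        (forall i, Sigma (chis i)) ->
        exists x : 'I_n -> M, forall i, sat (tup_env x p) (chis i)) ->
    exists x : 'I_n -> M, forall chi, Sigma chi -> sat (tup_env x p) chi.

(** The infinity-compatible order property of theta(x; y), |x| = n, |y| = k.
    P_{2m}(a_{i1}, b_{j1}, ..., a_{im}, b_{jm}) holds iff
    max{i_l} < min{j_l}, i.e. iff i_l < j_l' for all l, l'. *)
Definition has_inf_COP (M : structure) (n k : nat) (theta : formula) :=
  exists a b : nat -> ('I_k -> M),
    forall (m : nat) (I J : 'I_m -> nat),
      (exists x : 'I_n -> M,
          forall l, holds theta x (a (I l)) /\ holds theta x (b (J l)))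
      <-> (forall l l', I l < J l').

Definition has_SOP3 (M : structure) (n m : nat) (phi : formula) :=
  exists (psi : formula) (a : nat -> ('I_m -> M)) (c : nat -> ('I_n -> M)),
    [/\ formula_below (n + m) psi,
        indiscernible a,
        ~ (exists (x : 'I_n -> M) (w : 'I_m -> M), holds phi x w /\ holds psi x w),
        (forall i j, i <= j -> holds phi (c j) (a i)) /\
        (forall i j, j < i -> holds psi (c j) (a i)) &
        (forall i j, i < j ->
           ~ exists x : 'I_n -> M, holds phi x (a j) /\ holds psi x (a i))].

(** phi(x; y, z) := theta(x; y) /\ ~ theta(x; z), with |y| = |z| = k:
    variables 0..n-1 = x, n..n+k-1 = y, n+k..n+2k-1 = z. *)
Definition phi_of (n k : nat) (theta : formula) : formula :=
  fand theta (fneg (rename (fun i => if i < n then i else i + k) theta)).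

End FOL.

(* Main.v *)
Require Import Defs.
From mathcomp Require Import all_boot.
From mathcomp Require Import zify.
From Stdlib Require Import Lia.
From Stdlib Require Import FunctionalExtensionality IndefiniteDescription Classical.
Set Implicit Arguments. Unset Strict Implicit. Unset Printing Implicit Defensive.

Section Syn.
Variable L : signature.
Implicit Types (phi psi : formula L) (t : term L).

Lemma eval_rename (M : structure L) (e : nat -> M) s t :
  eval_term e (rename_term s t) = eval_term (e \o s) t.
Proof.
elim: t => [i|f ts IH] //=. congr interp_f. apply: functional_extensionality => i. exact: IH.
Qed.

Lemma scons_up (M : structure L) (e : nat -> M) a s :
  scons a e \o up s = scons a (e \o s).
Proof. by apply: functional_extensionality => -[|i]. Qed.

Lemma sat_rename (M : structure L) phi : forall (e : nat -> M) s,
  sat e (rename s phi) <-> sat (e \o s) phi.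
Proof.
elim: phi => [|t1 t2|r ts|p IH|p IHp q IHq|p IHp q IHq|p IHp q IHq|p IH|p IH] e s /=.
- by [].
- by rewrite !eval_rename.
- have -> : (fun i => eval_term e (rename_term s (ts i))) = (fun i => eval_term (e \o s) (ts i)) by
    apply: functional_extensionality => i; rewrite eval_rename.
  by [].
- by rewrite IH.
- by rewrite IHp IHq.
- by rewrite IHp IHq.
- by rewrite IHp IHq.
- split=> -[a Ha]; exists a; [rewrite -scons_up; apply/IH | apply/IH; rewrite scons_up]; done.
- split=> Ha a; [rewrite -scons_up; apply/IH | apply/IH; rewrite scons_up]; done.
Qed.

Lemma eval_below (M : structure L) (e e' : nat -> M) N t :
  term_below N t -> (forall v, v < N -> e v = e' v) -> eval_term e t = eval_term e' t.
Proof.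
elim: t => [i|f ts IH] /= Hb He; first exact: He.
congr interp_f. apply: functional_extensionality => i. exact: IH.
Qed.

Lemma sat_below (M : structure L) phi : forall N (e e' : nat -> M),
  formula_below N phi -> (forall v, v < N -> e v = e' v) -> (sat e phi <-> sat e' phi).
Proof.
elim: phi => [|t1 t2|r ts|p IH|p IHp q IHq|p IHp q IHq|p IHp q IHq|p IH|p IH] N e e' /=.
- by [].
- by move=> [H1 H2] He; rewrite (eval_below H1 He) (eval_below H2 He).
- move=> H He.
  have -> : (fun i => eval_term e (ts i)) = (fun i => eval_term e' (ts i)) by
    apply: functional_extensionality => i; rewrite (eval_below (H i) He).
  by [].
- by move=> H He; rewrite (IH _ _ _ H He).
- by move=> [H1 H2] He; rewrite (IHp _ _ _ H1 He) (IHq _ _ _ H2 He).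
- by move=> [H1 H2] He; rewrite (IHp _ _ _ H1 He) (IHq _ _ _ H2 He).
- by move=> [H1 H2] He; rewrite (IHp _ _ _ H1 He) (IHq _ _ _ H2 He).
- move=> H He; have He' : forall a v, v < N.+1 -> scons a e v = scons a e' v.
    by move=> a [|v] //= /He.
  by split=> -[a Ha]; exists a; [apply/(IH _ _ _ H (He' a))|apply/(IH _ _ _ H (He' a))].
- move=> H He; have He' : forall a v, v < N.+1 -> scons a e v = scons a e' v.
    by move=> a [|v] //= /He.
  by split=> Ha a; [apply/(IH _ _ _ H (He' a))|apply/(IH _ _ _ H (He' a))].
Qed.

Lemma term_below_rename N N' s t : (forall v, v < N -> s v < N') ->
  term_below N t -> term_below N' (rename_term s t).
Proof. move=> Hs; elim: t => [i|f ts IH] /=; [exact: Hs| move=> H i; exact: IH]. Qed.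

Lemma below_rename phi : forall N N' s, (forall v, v < N -> s v < N') ->
  formula_below N phi -> formula_below N' (rename s phi).
Proof.
elim: phi => [|t1 t2|r ts|p IH|p IHp q IHq|p IHp q IHq|p IHp q IHq|p IH|p IH] N N' s Hs /=.
- by [].
- by move=> [H1 H2]; split; apply: term_below_rename H1 || apply: term_below_rename H2.
- by move=> H i; apply: term_below_rename (H i).
- exact: IH.
- by move=> [H1 H2]; split; [apply: IHp H1|apply: IHq H2].
- by move=> [H1 H2]; split; [apply: IHp H1|apply: IHq H2].
- by move=> [H1 H2]; split; [apply: IHp H1|apply: IHq H2].
- apply: IH => -[|v] //=; exact: Hs.
- apply: IH => -[|v] //=; exact: Hs.
Qed.

Lemma term_below_mono N N' t : N <= N' -> term_below N t -> term_below N' t.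
Proof. move=> HN; elim: t => [i|f ts IH] /=; [move=> H; exact: leq_trans H HN| move=> H i; exact: IH]. Qed.

Lemma below_mono phi : forall N N', N <= N' -> formula_below N phi -> formula_below N' phi.
Proof.
elim: phi => [|t1 t2|r ts|p IH|p IHp q IHq|p IHp q IHq|p IHp q IHq|p IH|p IH] N N' HN /=.
- by [].
- by move=> [H1 H2]; split; apply: term_below_mono HN _.
- by move=> H i; apply: term_below_mono HN _.
- exact: IH.
- by move=> [H1 H2]; split; [apply: IHp H1|apply: IHq H2].
- by move=> [H1 H2]; split; [apply: IHp H1|apply: IHq H2].
- by move=> [H1 H2]; split; [apply: IHp H1|apply: IHq H2].
- by apply: IH.
- by apply: IH.
Qed.

Definition fexN n phi := iter n (@fex L) phi.

Lemma sat_fexN (M : structure L) n phi : forall (e : nat -> M),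
  sat e (fexN n phi) <-> exists w : nat -> M, sat (fun v => if v < n then w v else e (v - n)) phi.
Proof.
elim: n => [|n IH] e /=.
- have E : forall w : nat -> M, (fun v => if v < 0 then w v else e (v - 0)) = e.
    by move=> w; apply: functional_extensionality => v; rewrite subn0.
  by split; [move=> H; exists e; rewrite E | move=> [w]; rewrite E].
- split.
  + move=> [a /IH [w Hw]]. exists (fun v => if v < n then w v else a).
    have -> : (fun v => if v < n.+1 then (if v < n then w v else a) else e (v - n.+1))
       = (fun v => if v < n then w v else scons a e (v - n)) => //.
    apply: functional_extensionality => v.
    case: (ltngtP v n) => Hv.
    * by rewrite ltnS ltnW.
    * have h1 : (v < n.+1) = false by rewrite ltnNge Hv.
      have h2 : (v < n) = false by rewrite ltnNge ltnW.
      rewrite ?h1 ?h2 -(subnSK Hv) //.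
    * by rewrite Hv ?ltnSn ?ltnn subnn.
  + move=> [w Hw]. exists (w n). apply/IH. exists w.
    move: Hw; congr sat. apply: functional_extensionality => v.
    case: (ltngtP v n) => Hv.
    * by rewrite ltnS ltnW.
    * have h1 : (v < n.+1) = false by rewrite ltnNge Hv.
      have h2 : (v < n) = false by rewrite ltnNge ltnW.
      rewrite ?h1 ?h2 -(subnSK Hv) //.
    * by rewrite Hv ?ltnSn ?ltnn subnn.
Qed.

Lemma below_fexN n phi N : formula_below (n + N) phi -> formula_below N (fexN n phi).
Proof. elim: n N => [|n IH] N /=; first by []. move=> H; apply: IH; by rewrite addnS. Qed.

End Syn.

Definition incr (j : nat -> nat) := forall a b, a < b -> j a < j b.
Definition homog (N : nat) (c : seq nat -> Prop) (j : nat -> nat) :=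
  forall u v, sorted ltn u -> sorted ltn v -> size u = N -> size v = N ->
    (c (map j u) <-> c (map j v)).

Lemma incr_id : incr id. Proof. by []. Qed.
Lemma incr_comp f g : incr f -> incr g -> incr (fun i => f (g i)).
Proof. by move=> Hf Hg a b /Hg /Hf. Qed.
Lemma incr_step f : (forall i, f i < f i.+1) -> incr f.
Proof.
move=> H a b Hab. have T : forall y x z : nat, x < y -> y < z -> x < z by move=> y x z; exact: ltn_trans.
exact: (@homo_ltn nat f (fun x y => x < y) T H a b Hab).
Qed.
Lemma incr_sorted f u : incr f -> sorted ltn u -> sorted ltn (map f u).
Proof. move=> Hf; apply: homo_sorted => x y; exact: Hf. Qed.
Lemma incr_ge f : incr f -> forall i, i <= f i.
Proof. move=> Hf; elim=> [|i IH] //; apply: leq_ltn_trans IH (Hf _ _ (ltnSn i)). Qed.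
Lemma incr_lt f a b : incr f -> f a < f b -> a < b.
Proof. move=> Hf H; case: (ltngtP a b) => // Hab; [move: (Hf _ _ Hab)|move: H; rewrite Hab ltnn //].
  by move=> H'; move: (ltn_trans H H'); rewrite ltnn. Qed.

Lemma enum_inf (P : nat -> Prop) : (forall n, exists k, n <= k /\ P k) ->
  exists q, incr q /\ forall i, P (q i).
Proof.
move=> H. have [F HF] := functional_choice _ H.
pose q := fix q i := match i with 0 => F 0 | i'.+1 => F (q i').+1 end.
exists q; split; last by case=> [|i] /=; [case: (HF 0)|case: (HF (q i).+1)].
have Hs : forall i, q i < q i.+1 by move=> i /=; case: (HF (q i).+1).
exact: (incr_step Hs).
Qed.

Lemma range_sorted h ws : incr h -> sorted ltn ws -> (forall w, w \in ws -> exists p, w = h p) ->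
  exists u, [/\ sorted ltn u, size u = size ws & ws = map h u].
Proof.
move=> Hh; elim: ws => [|w ws IH] Hs Hr; first by exists [::].
have [u [Hu Hsz Ews]] : exists u, [/\ sorted ltn u, size u = size ws & ws = map h u].
  apply: IH; first exact: path_sorted Hs.
  by move=> x Hx; apply: Hr; rewrite inE Hx orbT.
have [p Ew] := Hr w (mem_head _ _).
move: Hs; rewrite Ews Ew => Hs.
exists (p :: u); split; [|by rewrite /= size_map|by []].
clear Ews Hsz; case: u Hu Hs => [|q u] //= Hu /andP [Hpq _].
by rewrite Hu andbT (incr_lt Hh Hpq).
Qed.

Theorem ramsey N : forall c : seq nat -> Prop, exists j, incr j /\ homog N c j.
Proof.
elim: N => [|N IHN] c.
  exists id; split; first exact: incr_id.
  by move=> [|? ?] [|? ?].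
have [R HR] := functional_choice _ IHN.
pose cp (h : nat -> nat) := fun u => c (h 0 :: map (fun i => h i.+1) u).
pose H := fix H k := match k with 0 => id | k'.+1 =>
   fun i => H k' (R (cp (H k')) i).+1 end.
pose x k := H k 0.
pose col k := cp (H k) (map (R (cp (H k))) (iota 0 N)).
have Hinc : forall k, incr (H k).
  elim=> [|k IH] /=; first exact: incr_id.
  apply: incr_comp => //. apply: (incr_comp (f := S)); first by [].
  by case: (HR (cp (H k))).
have Hcol : forall k u, sorted ltn u -> size u = N -> (c (x k :: map (H k.+1) u) <-> col k).
  move=> k u Hu Hsz. have [_ Hh] := HR (cp (H k)).
  rewrite /col -(Hh u (iota 0 N)) //; last by rewrite size_iota.
  - have -> : map (H k.+1) u = map (fun i => H k i.+1) (map (R (cp (H k))) u) by rewrite -map_comp.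
    by [].
  - exact: iota_ltn_sorted.
have Hrange : forall a b i, a <= b -> exists p, H b i = H a p.
  move=> a b i /subnK <-; elim: (b - a) i => [|d IH] i; first by exists i.
  rewrite addSn /=; exact: IH.
have Hx : incr x.
  apply: incr_step => k. rewrite /x /=. by apply: Hinc.
have [P [HP HPcol]] : exists P : Prop, (forall n, exists k, n <= k /\ (col k <-> P)) /\ True.
  case: (classic (forall n, exists k, n <= k /\ col k)) => Hc.
    exists True; split => // n; have [k [Hk Hk']] := Hc n; exists k; split => //.
  exists False; split => // n.
  apply: NNPP => Hn; apply: Hc => n'. apply: NNPP => Hn'; apply: Hn.
  exists (maxn n n'); split; first exact: leq_maxl.
  split => // Hcl; apply: Hn'; exists (maxn n n'); split => //; exact: leq_maxr.
have [q [Hq HqP]] := enum_inf HP.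
exists (fun i => x (q i)); split; first exact: incr_comp.
have key : forall u, sorted ltn u -> size u = N.+1 -> (c (map (fun i => x (q i)) u) <-> P).
  case=> [|u0 u] //= Hs [Hsz].
  have Hu : sorted ltn u := path_sorted Hs.
  have Hall : all (ltn u0) u := order_path_min ltn_trans Hs.
  have [u' [Hu' Hsz' Hws]] : exists u', [/\ sorted ltn u', size u' = size (map (fun i => x (q i)) u)
     & map (fun i => x (q i)) u = map (H (q u0).+1) u'].
    apply: range_sorted => //.
    - exact: incr_sorted (incr_comp Hx Hq) Hu.
    - move=> w /mapP [t Ht ->]. rewrite /x.
      have Ht' : u0 < t by move/allP: Hall => /(_ t Ht).
      have := Hq _ _ Ht'. move=> /Hrange H'. exact: (H' 0).
  rewrite Hws Hcol //; last by rewrite Hsz' size_map.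
  try exact: HqP.
move=> u v Hu Hv Hsu Hsv. by rewrite (key u) // (key v).
Qed.

Section Env.
Variable L : signature.
Variable M : structure L.

Lemma tup_envL n (x : 'I_n -> M) rest i (H : i < n) : tup_env x rest i = x (Ordinal H).
Proof. by rewrite /tup_env insubT. Qed.
Lemma tup_envR n (x : 'I_n -> M) rest i : n <= i -> tup_env x rest i = rest (i - n).
Proof. by move=> H; rewrite /tup_env insubF // ltnNge H. Qed.

Variable m : nat.
Hypothesis Hm : 0 < m.

Lemma blk_div b o : o < m -> (b * m + o) %/ m = b.
Proof. by move=> Ho; rewrite divnMDl // divn_small // addn0. Qed.
Lemma blk_mod b o : o < m -> (b * m + o) %% m = o.
Proof. by move=> Ho; rewrite modnMDl modn_small. Qed.
Lemma blk_lt b o c : o < m -> (b * m + o < c * m) = (b < c).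
Proof.
move=> Ho; case: (ltnP b c) => Hbc.
- apply: (leq_trans (n := b.+1 * m)); first by rewrite mulSnr ltn_add2l.
  by rewrite leq_mul2r Hbc orbT.
- apply/negbTE; rewrite -leqNgt; apply: leq_trans (leq_addr _ _); by rewrite leq_mul2r Hbc orbT.
Qed.
Lemma blk_decomp v : v = v %/ m * m + v %% m.
Proof. exact: divn_eq. Qed.

Definition seq_env (g : nat -> 'I_m -> M) : nat -> M :=
  fun v => g (v %/ m) (Ordinal (ltn_pmod v Hm)).

Lemma seq_env_blk g b o (Ho : o < m) : seq_env g (b * m + o) = g b (Ordinal Ho).
Proof.
rewrite /seq_env. move: (ltn_pmod (b * m + o) Hm). rewrite blk_div // => H.
congr (g b _); apply: val_inj => /=; exact: blk_mod.
Qed.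

Definition dtup : 'I_m -> M := fun _ => inh M.

Lemma cat_env_blk (s : seq ('I_m -> M)) b o (Ho : o < m) : b < size s ->
  cat_env s (b * m + o) = nth dtup s b (Ordinal Ho).
Proof.
elim: s b => [|x s IH] [|b] //= Hb.
- by rewrite mul0n add0n /cat_env /= tup_envL.
- rewrite /cat_env /= tup_envR; last by rewrite mulSn -addnA leq_addr.
  rewrite mulSn -addnA addKn. exact: IH.
Qed.

Definition pos (s : seq nat) (v : nat) := nth 0 s (v %/ m) * m + v %% m.

Lemma cat_env_pos (g : nat -> 'I_m -> M) s v : v < size s * m ->
  cat_env (map g s) v = (seq_env g \o pos s) v.
Proof.
move=> Hv. rewrite /= /pos (blk_decomp v).
have Ho := ltn_pmod v Hm.
have Hb : v %/ m < size s by rewrite ltn_divLR.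
rewrite blk_div // blk_mod // cat_env_blk; last by rewrite size_map.
by rewrite seq_env_blk (nth_map 0).
Qed.

Lemma sat_pos (g : nat -> 'I_m -> M) s chi : formula_below (size s * m) chi ->
  (sat (seq_env g) (rename (pos s) chi) <-> sat (cat_env (map g s)) chi).
Proof.
move=> Hb. rewrite sat_rename. apply: sat_below Hb _ => v Hv. by rewrite cat_env_pos.
Qed.

Lemma nth_le_sumn (s : seq nat) b : nth 0 s b <= sumn s.
Proof. elim: s b => [|x s IH] [|b] //=; [exact: leq_addr| apply: leq_trans (IH b) _; exact: leq_addl]. Qed.

Lemma below_pos s (chi : formula L) : formula_below (size s * m) chi ->
  formula_below ((sumn s).+1 * m) (rename (pos s) chi).
Proof.
apply: below_rename => v Hv. rewrite /pos blk_lt; last exact: ltn_pmod.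
by rewrite ltnS nth_le_sumn.
Qed.

End Env.

Section Compact.
Variable L : signature.
Variable M : structure L.
Variable m : nat.
Hypothesis Hm : 0 < m.

Notation senv := (seq_env Hm).

Definition sig_st K Lb v :=
  let E := (Lb - K.+1) * m in
  if v < K * m then E + m + v else if v < K * m + m then E + (v - K * m) else v - (K * m + m).

Definition stepf K Lb (Phi : formula L) := fexN ((Lb - K.+1) * m) (rename (sig_st K Lb) Phi).

Lemma step_env K Lb (f g : nat -> 'I_m -> M) x (w : nat -> M) :
  K < Lb ->
  (forall i, i < K -> g i = f i) -> g K = x ->
  (forall b o (Ho : o < m), b < Lb - K.+1 -> w (b * m + o) = g (K.+1 + b) (Ordinal Ho)) ->
  forall v, v < Lb * m ->
  ((fun v => if v < (Lb - K.+1) * m then w v else tup_env x (senv f) (v - (Lb - K.+1) * m)) \o sig_st K Lb) v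
  = senv g v.
Proof.
move=> HKL Hgf HgK Hw v Hv.
rewrite (blk_decomp m v) in Hv *.
have Ho := ltn_pmod v Hm.
move: (v %/ m) (v %% m) Ho Hv => b o Ho Hv.
rewrite (blk_lt _ _ Ho) in Hv.
rewrite seq_env_blk /= /sig_st.
set E := (Lb - K.+1) * m.
case: (ltngtP b K) => Hb.
- rewrite blk_lt // Hb.
  have -> : (E + m + (b * m + o) < E) = false by rewrite -addnA ltnNge leq_addr.
  rewrite -addnA addKn tup_envR ?leq_addr // addKn seq_env_blk Hgf //.
- have h1 : (b * m + o < K * m) = false by rewrite blk_lt // ltnNge ltnW.
  have h2 : (b * m + o < K * m + m) = false.
    by rewrite -mulSnr blk_lt // ltnNge Hb.
  rewrite h1 h2.
  have Hb' : b - K.+1 < Lb - K.+1 by lia.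
  have Hlt : b * m + o - (K * m + m) = (b - K.+1) * m + o.
    by rewrite -mulSnr mulnBl addnBAC // leq_mul2r Hb orbT.
  rewrite Hlt blk_lt // Hb' Hw // subnKC //.
- subst b. rewrite blk_lt // ltnn -mulSnr blk_lt // ltnSn addKn.
  have -> : (E + o < E) = false by rewrite ltnNge leq_addr.
  rewrite addKn tup_envL HgK. congr x; try exact: val_inj.
Qed.

Lemma step_sem (f : nat -> 'I_m -> M) K Lb Phi x : formula_below (Lb * m) Phi -> K < Lb ->
  (sat (tup_env x (senv f)) (stepf K Lb Phi) <->
   exists g, [/\ forall i, i < K -> g i = f i, g K = x & sat (senv g) Phi]).
Proof.
move=> HPhi HKL. rewrite /stepf sat_fexN. split.
- move=> [w Hw]. rewrite sat_rename in Hw.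
  pose g i := if i < K then f i else if i == K then x else
     (fun o : 'I_m => w ((i - K.+1) * m + o)).
  exists g; split.
  + by move=> i Hi; rewrite /g Hi.
  + by rewrite /g ltnn eqxx.
  + apply/(sat_below HPhi _).2: Hw => v Hv. symmetry. apply: step_env => //.
    * by move=> i Hi; rewrite /g Hi.
    * by rewrite /g ltnn eqxx.
    * move=> b o Ho Hb. rewrite /g.
      have -> : (K.+1 + b < K) = false by rewrite ltnNge ltnW // ltnS leq_addr.
      have -> : (K.+1 + b == K) = false by apply/negbTE; rewrite gtn_eqF // ltnS leq_addr.
      by rewrite addKn.
- move=> [g [Hgf HgK Hg]].
  exists (fun v => senv g (K * m + m + v)). rewrite sat_rename.
  apply/(sat_below HPhi _).1: Hg => v Hv. symmetry. apply: step_env => //.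
  move=> b o Ho Hb. by rewrite addnA -mulSnr -mulnDl seq_env_blk.
Qed.

Inductive CondC (Cond : formula L -> Prop) : formula L -> Prop :=
| CC_T : CondC Cond (fimp (@fbot L) (@fbot L))
| CC_A p q : CondC Cond p -> CondC Cond q -> CondC Cond (fand p q)
| CC_B p : Cond p -> CondC Cond p.

Variable Cond : formula L -> Prop.
Hypothesis Cond_below : forall Phi, Cond Phi -> exists Lb, formula_below (Lb * m) Phi.
Hypothesis Cond_fs : forall Phi, CondC Cond Phi -> exists g : nat -> 'I_m -> M, sat (senv g) Phi.

Lemma CondC_below Phi : CondC Cond Phi -> exists Lb, formula_below (Lb * m) Phi.
Proof.
elim=> [|p q _ [L1 H1] _ [L2 H2]|p /Cond_below //]; first by exists 0.
exists (maxn L1 L2); split; [apply: below_mono H1|apply: below_mono H2];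
  rewrite leq_mul2r ?leq_maxl ?leq_maxr orbT //.
Qed.

Definition Inv K (f : nat -> 'I_m -> M) :=
  forall Phi, CondC Cond Phi -> exists g : nat -> 'I_m -> M, (forall i, i < K -> g i = f i) /\ sat (senv g) Phi.

Hypothesis Hsat : aleph1_saturated M.

Lemma Inv_step K f : Inv K f -> exists x, Inv K.+1 (fun i => if i == K then x else f i).
Proof.
move=> HI.
pose Sigma (Psi : formula L) := exists Phi Lb, [/\ CondC Cond Phi, formula_below (Lb * m) Phi, K < Lb & Psi = stepf K Lb Phi].
have Hfin : forall r (chis : 'I_r -> formula L), (forall i, Sigma (chis i)) ->
    exists Phi, CondC Cond Phi /\ forall g, (forall i, i < K -> g i = f i) -> sat (senv g) Phi ->
       forall i, sat (tup_env (g K) (senv f)) (chis i).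
  elim=> [|r IH] chis Hch.
    exists (fimp (@fbot L) (@fbot L)); split; first exact: CC_T. by move=> g _ _ [].
  have [Phi1 [HP1 H1]] := IH (fun i => chis (widen_ord (leqnSn r) i)) (fun i => Hch _).
  have [Phi2 [Lb [HP2 Hb2 HK2 E2]]] := Hch ord_max.
  exists (fand Phi1 Phi2); split; first exact: CC_A.
  move=> g Hgf /= [Hg1 Hg2] i.
  case: (ltnP i r) => Hir.
  - have -> : i = widen_ord (leqnSn r) (Ordinal Hir) by apply: val_inj.
    exact: H1.
  - have -> : i = ord_max by apply: val_inj => /=; apply/eqP; rewrite eqn_leq Hir -ltnS ltn_ord.
    rewrite E2. apply/step_sem => //. by exists g.
have [x Hx] : exists x : 'I_m -> M, forall chi, Sigma chi -> sat (tup_env x (senv f)) chi.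
  apply: Hsat => r chis Hch.
  have [Phi [HP H]] := Hfin r chis Hch.
  have [g [Hgf Hg]] := HI Phi HP.
  exists (g K); exact: H.
exists x => Phi HP.
have [Lb HLb] := CondC_below HP.
have HLb' : formula_below (maxn Lb K.+1 * m) Phi.
  by apply: below_mono HLb; rewrite leq_mul2r leq_maxl orbT.
have HK : K < maxn Lb K.+1 by rewrite leq_maxr.
have HS : sat (tup_env x (senv f)) (stepf K (maxn Lb K.+1) Phi).
  by apply: Hx; exists Phi, (maxn Lb K.+1); split.
have [g [Hgf HgK Hg]] := (@step_sem f K (maxn Lb K.+1) Phi x HLb' HK).1 HS.
exists g; split => // i Hi /=.
case: (ltngtP i K) => HiK.
- exact: Hgf.
- by move: Hi; rewrite ltnS leqNgt HiK.
- by rewrite HiK.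
Qed.

Lemma senv_agree Lb (g g' : nat -> 'I_m -> M) : (forall i, i < Lb -> g i = g' i) ->
  forall v, v < Lb * m -> senv g v = senv g' v.
Proof. move=> H v Hv; rewrite /seq_env H //; by rewrite ltn_divLR. Qed.

Lemma compact : exists g : nat -> 'I_m -> M, forall Phi, CondC Cond Phi -> sat (senv g) Phi.
Proof.
have H0 : Inv 0 (fun _ (_ : 'I_m) => inh M). by move=> Phi HP; have [g Hg] := Cond_fs HP; exists g.
have step : forall K (fs : {f | Inv K f}), {f' | Inv K.+1 f' /\ forall i, i < K -> f' i = proj1_sig fs i}.
  move=> K [f Hf]. apply: constructive_indefinite_description.
  have [x Hx] := Inv_step Hf.
  exists (fun i => if i == K then x else f i); split => // i Hi; by rewrite (ltn_eqF Hi).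
pose F := fix F K : {f | Inv K f} := match K as K0 return {f | Inv K0 f} with
  | 0 => exist _ _ H0
  | K'.+1 => let s := step K' (F K') in exist _ (proj1_sig s) (proj1 (proj2_sig s)) end.
pose gs i := proj1_sig (F i.+1) i.
have HF : forall K i, i < K -> proj1_sig (F K) i = gs i.
  elim=> [|K IH] i //= Hi.
  case: (ltngtP i K) => HiK.
  - rewrite (proj2 (proj2_sig (step K (F K)))) //. exact: IH.
  - by move: Hi; rewrite ltnS leqNgt HiK.
  - by rewrite HiK.
exists gs => Phi HP.
have [Lb HLb] := CondC_below HP.
have [g [Hg1 Hg2]] := proj2_sig (F Lb) Phi HP.
apply/(sat_below HLb _).1: Hg2 => v Hv.
apply: senv_agree Hv => i Hi. rewrite Hg1 //. exact: HF.
Qed.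

End Compact.

Section Extract.
Variable L : signature.
Variable M : structure L.
Variable m : nat.
Hypothesis Hm : 0 < m.
Hypothesis Hsat : aleph1_saturated M.
Variable e : nat -> 'I_m -> M.

Notation senv := (seq_env Hm).
Notation pos := (pos m).

Definition CondE (Phi : formula L) :=
  (exists chi s, [/\ sorted ltn s, formula_below (size s * m) chi,
     (forall t, sorted ltn t -> size t = size s -> sat (cat_env (map e t)) chi)
     & Phi = rename (pos s) chi])
  \/ (exists chi s t, [/\ sorted ltn s, sorted ltn t, size t = size s, formula_below (size s * m) chi
     & Phi = fand (fimp (rename (pos s) chi) (rename (pos t) chi)) (fimp (rename (pos t) chi) (rename (pos s) chi))]).

Lemma CondE_below Phi : CondE Phi -> exists Lb, formula_below (Lb * m) Phi.
Proof.
case=> [[chi [s [_ Hb _ ->]]]|[chi [s [t [_ _ Hst Hb ->]]]]].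
- exists (sumn s).+1; exact: below_pos.
- have Hbt : formula_below (size t * m) chi by rewrite Hst.
  have B1 := below_pos Hm Hb. have B2 := below_pos Hm Hbt.
  exists (maxn (sumn s).+1 (sumn t).+1).
  have l1 : (sumn s).+1 * m <= maxn (sumn s).+1 (sumn t).+1 * m by rewrite leq_mul2r leq_maxl orbT.
  have l2 : (sumn t).+1 * m <= maxn (sumn s).+1 (sumn t).+1 * m by rewrite leq_mul2r leq_maxr orbT.
  by split; split; [apply: below_mono l1 B1|apply: below_mono l2 B2|apply: below_mono l2 B2|apply: below_mono l1 B1].
Qed.

Definition Good (Phi : formula L) (h : nat -> nat) :=
  forall j, incr j -> sat (senv (fun i => e (h (j i)))) Phi.

Lemma good_ex Phi : CondC CondE Phi -> forall h, incr h -> exists j, incr j /\ Good Phi (fun i => h (j i)).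
Proof.
elim=> [|p q _ IHp _ IHq|p HP] h Hh.
- exists id; split => //; by move=> j _ /=.
- have [j1 [Hj1 G1]] := IHp h Hh.
  have [j2 [Hj2 G2]] := IHq (fun i => h (j1 i)) (incr_comp Hh Hj1).
  exists (fun i => j1 (j2 i)); split; first exact: incr_comp.
  move=> j Hj /=; split; last exact: G2.
  exact: (G1 (fun i => j2 (j i)) (incr_comp Hj2 Hj)).
- case: HP => [[chi [s [Hs Hb Hall ->]]]|[chi [s [t [Hs Ht Hst Hb ->]]]]].
  + exists id; split => // j Hj. apply/sat_pos => //.
    rewrite (map_comp e (fun i => h (j i))). apply: Hall; last by rewrite size_map.
    exact: incr_sorted (incr_comp Hh Hj) Hs.
  + have [j [Hj Hh']] := ramsey (size s) (fun u => sat (cat_env (map e (map h u))) chi).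
    exists j; split => // j' Hj' /=.
    have Hbt : formula_below (size t * m) chi by rewrite Hst.
    have E1 := sat_pos Hm (fun i => e (h (j (j' i)))) Hb.
    have E2 := sat_pos Hm (fun i => e (h (j (j' i)))) Hbt.
    have K : sat (cat_env (map (fun i => e (h (j (j' i)))) s)) chi <->
             sat (cat_env (map (fun i => e (h (j (j' i)))) t)) chi.
      rewrite !(map_comp e (fun i => h (j (j' i)))) !(map_comp h (fun i => j (j' i))) !(map_comp j j').
      apply: Hh'; rewrite ?size_map //; exact: incr_sorted.
    split => H; [apply/E2; apply/K; apply/E1 | apply/E1; apply/K; apply/E2]; exact: H.
Qed.

Lemma extract : exists e' : nat -> 'I_m -> M,
  indiscernible e' /\
  forall N chi, formula_below (N * m) chi ->
    (forall t, sorted ltn t -> size t = N -> sat (cat_env (map e t)) chi) ->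
    forall s, sorted ltn s -> size s = N -> sat (cat_env (map e' s)) chi.
Proof.
have Hfs : forall Phi, CondC CondE Phi -> exists g : nat -> 'I_m -> M, sat (senv g) Phi.
  move=> Phi HP; have [j [Hj G]] := good_ex HP incr_id.
  exists (fun i => e (j i)); exact: (G id incr_id).
have [e' He'] := @compact L M m Hm CondE CondE_below Hfs Hsat.
exists e'; split.
- move=> chi s t Hst Hs Ht Hb.
  have HC : CondC CondE (fand (fimp (rename (pos s) chi) (rename (pos t) chi)) (fimp (rename (pos t) chi) (rename (pos s) chi))).
    apply: CC_B; right; exists chi, s, t; split => //.
  have Hbt : formula_below (size t * m) chi by rewrite -Hst.
  have [H1 H2] := He' _ HC.
  split => H; [apply/(sat_pos Hm _ Hbt); apply: H1; apply/(sat_pos Hm _ Hb)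
              |apply/(sat_pos Hm _ Hb); apply: H2; apply/(sat_pos Hm _ Hbt)]; exact: H.
- move=> N chi Hb Hall s Hs Hsz. subst N.
  apply/(sat_pos Hm _ Hb). apply: He'; apply: CC_B; left; exists chi, s; split => //.
Qed.

End Extract.

Section Main.
Variable L : signature.
Variable M : structure L.
Variables n m : nat.
Hypothesis Hm : 0 < m.

Definition ftrue : formula L := fimp (@fbot L) (@fbot L).

Definition blkc b (th : formula L) :=
  rename (fun v => if v < n then v else n + b * m + (v - n)) th.

Lemma blk_sem (s : seq ('I_m -> M)) b (w : nat -> M) th :
  formula_below (n + m) th -> b < size s ->
  (sat (fun v => if v < n then w v else cat_env s (v - n)) (blkc b th) <->
   holds th (fun o : 'I_n => w o) (nth (@dtup L M m) s b)).
Proof.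
move=> Hth Hb. rewrite /blkc sat_rename /holds. apply: sat_below Hth _ => v Hv /=.
case: (ltnP v n) => Hvn.
- by rewrite ?Hvn tup_envL.
- have h1 : (n + b * m + (v - n) < n) = false by rewrite ltnNge -addnA leq_addr.
  have Ho : v - n < m by lia.
  rewrite h1 -addnA addKn (cat_env_blk Ho) // tup_envR // tup_envL //.
Qed.

Lemma below_blkc b N th : formula_below (n + m) th -> b < N -> formula_below (n + N * m) (blkc b th).
Proof.
move=> Hth HbN. apply: below_rename Hth => v Hv.
case: (ltnP v n) => Hvn; first by apply: leq_trans (leq_addr _ _).
have Ho : v - n < m by lia.
rewrite -addnA ltn_add2l blk_lt //.
Qed.

Definition bigc (F : nat -> formula L) (l : seq nat) :=
  foldr (fun b acc => fand (F b) acc) ftrue l.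

Lemma sat_bigc (E : nat -> M) F l : sat E (bigc F l) <-> forall b, b \in l -> sat E (F b).
Proof.
elim: l => [|x l IH] /=; first by split => // _ b.
rewrite IH; split.
- move=> [H1 H2] b; rewrite inE => /orP [/eqP -> //|]; exact: H2.
- move=> H; split; first by apply: H; rewrite mem_head.
  by move=> b Hb; apply: H; rewrite inE Hb orbT.
Qed.

Lemma below_bigc N F l : (forall b, b \in l -> formula_below N (F b)) -> formula_below N (bigc F l).
Proof.
elim: l => [|x l IH] H //=. split; first by apply: H; rewrite mem_head.
apply: IH => b Hb; apply: H; by rewrite inE Hb orbT.
Qed.

Definition blockf i (th : formula L) := rename (fun v => if v < n then v else v + i * m) th.

Lemma blockf_sem (g : nat -> 'I_m -> M) i th (x : 'I_n -> M) : formula_below (n + m) th ->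
  (sat (tup_env x (seq_env Hm g)) (blockf i th) <-> holds th x (g i)).
Proof.
move=> Hth. rewrite /blockf sat_rename /holds. apply: sat_below Hth _ => v Hv /=.
case: (ltnP v n) => Hvn.
- by rewrite ?Hvn !tup_envL.
- have Ho : v - n < m by lia.
  rewrite tup_envR ?(leq_trans Hvn (leq_addr _ _)) //.
  rewrite tup_envR // tup_envL.
  have -> : v + i * m - n = i * m + (v - n) by lia.
  by rewrite (seq_env_blk Hm _ _ Ho).
Qed.

Lemma fun_tup (x : 'I_n -> M) : (fun o : 'I_n => tup_env x (default_env M) o) = x.
Proof. apply: functional_extensionality => o. rewrite tup_envL. congr x; exact: val_inj. Qed.

End Main.

Unset Implicit Arguments.
Theorem mainTheorem9 (L : signature) (M : structure L) (n k : nat)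
  (theta : formula L) :
  aleph1_saturated M ->
  formula_below (n + k) theta ->
  has_inf_COP M n k theta ->
  has_SOP3 M n (k + k) (phi_of n k theta).
Proof.
move=> Hsat Hth [a [b Hcop]].
pose R := rename (fun i => if i < n then i else i + k) theta.
have Hk : 0 < k.
  case: (posnP k) => // Hk0. exfalso. subst k.
  have h1 := (Hcop 1 (fun _ => 0) (fun _ => 0)).1.
  have [x Hx] : exists x : 'I_n -> M, forall l : 'I_1, holds theta x (a 0) /\ holds theta x (b 1).
    apply/(Hcop 1 (fun _ => 0) (fun _ => 1)).2 => //.
  have : forall l l' : 'I_1, 0 < 0.
    apply: h1; exists x => l; split; first by case: (Hx l).
    have [_ H] := Hx l. move: H; rewrite /holds. congr sat.
    apply: functional_extensionality => v. case: (ltnP v n) => Hv.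
    + by rewrite !tup_envL.
    + by rewrite !tup_envR.
  by move=> /(_ ord0 ord0).
set m := k + k.
have Hm : 0 < m by rewrite /m addn_gt0 Hk.
have HthM : formula_below (n + m) theta by apply: below_mono Hth; rewrite /m leq_add2l leq_addr.
have HRM : formula_below (n + m) R.
  apply: below_rename Hth => v Hv. case: (ltnP v n) => Hvn; rewrite /m; lia.
pose e (i : nat) : 'I_m -> M := fun o => tup_env (a i) (tup_env (b i) (default_env M)) o.
have He_a : forall i (x : 'I_n -> M), holds theta x (e i) <-> holds theta x (a i).
  move=> i x. rewrite /holds. apply: sat_below Hth _ => v Hv.
  case: (ltnP v n) => Hvn; first by rewrite !tup_envL.
  have Hvk : v - n < k by lia.
  have Hvm : v - n < m by rewrite /m; lia.
  by rewrite [LHS]tup_envR // [RHS]tup_envR // (tup_envL _ _ Hvm) /e /= !(tup_envL _ _ Hvk).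
have He_b : forall i (x : 'I_n -> M), holds R x (e i) <-> holds theta x (b i).
  move=> i x. rewrite /holds /R sat_rename. apply: sat_below Hth _ => v Hv /=.
  case: (ltnP v n) => Hvn; first by rewrite ?Hvn !tup_envL.
  have Hvk : v - n < k by lia.
  have Hvm : v + k - n < m by rewrite /m; lia.
  rewrite [LHS]tup_envR ?(leq_trans Hvn (leq_addr _ _)) // [RHS]tup_envR //.
  rewrite (tup_envL _ _ Hvm) /e /= tup_envR; last by lia.
  by have -> : v + k - n - k = v - n by lia.
pose chi1 := fneg (fexN n (fand (blkc n m 0 theta) (blkc n m 0 R))).
pose chi2 := fneg (fexN n (fand (blkc n m 1 theta) (blkc n m 0 R))).
pose chi3 j K := fexN n (bigc (fun bb => if bb <= j then blkc n m bb theta else blkc n m bb R) (iota 0 K.+1)).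
have B1 : formula_below (1 * m) chi1.
  apply: below_fexN; split; apply: (below_blkc Hm) => //.
have B2 : formula_below (2 * m) chi2.
  apply: below_fexN; split; apply: (below_blkc Hm) => //.
have B3 : forall j K, formula_below (K.+1 * m) (chi3 j K).
  move=> j K; apply: below_fexN; apply: below_bigc => bb; rewrite mem_iota add0n => /andP [_ Hb].
  by case: ifP => _; apply: (below_blkc Hm).
have EM1 : forall t, sorted ltn t -> size t = 1 -> sat (cat_env (map e t)) chi1.
  case=> [|i [|? ?]] // _ _ /sat_fexN [w [H1 H2]].
  have {}H1 := (He_a _ _).1 ((blk_sem Hm w HthM (isT : 0 < size (map e [:: i]))).1 H1).
  have {}H2 := (He_b _ _).1 ((blk_sem Hm w HRM (isT : 0 < size (map e [:: i]))).1 H2).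
  have : forall l l' : 'I_1, i < i.
    apply/(Hcop 1 (fun _ => i) (fun _ => i)).1. by exists (fun o => w o).
  by move=> /(_ ord0 ord0); rewrite ltnn.
have EM2 : forall t, sorted ltn t -> size t = 2 -> sat (cat_env (map e t)) chi2.
  case=> [|i [|j [|? ?]]] // /andP [Hij _] _ /sat_fexN [w [H1 H2]].
  have {}H1 := (He_a _ _).1 ((blk_sem Hm w HthM (isT : 1 < size (map e [:: i; j]))).1 H1).
  have {}H2 := (He_b _ _).1 ((blk_sem Hm w HRM (isT : 0 < size (map e [:: i; j]))).1 H2).
  have : forall l l' : 'I_1, j < i.
    apply/(Hcop 1 (fun _ => j) (fun _ => i)).1. by exists (fun o => w o).
  move=> /(_ ord0 ord0) Hji. by move: (ltn_trans Hij Hji); rewrite ltnn.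
have EM3 : forall j K, j < K -> forall t, sorted ltn t -> size t = K.+1 -> sat (cat_env (map e t)) (chi3 j K).
  move=> j K HjK t Ht Hsz.
  have Hnth : forall p q, p < q -> q < K.+1 -> nth 0 t p < nth 0 t q.
    move=> p q Hpq Hq. apply: (sorted_ltn_nth ltn_trans 0 Ht) => //; rewrite inE Hsz //.
    exact: ltn_trans Hpq Hq.
  have HIJ : forall l l' : 'I_K.+1, nth 0 t (minn l j) < nth 0 t (maxn l' j.+1).
    move=> l l'; apply: Hnth.
    - exact: leq_ltn_trans (geq_minr _ _) (leq_trans (ltnSn j) (leq_maxr _ _)).
    - by rewrite gtn_max ltn_ord ltnS HjK.
  have [x Hx] := (Hcop K.+1 (fun l => nth 0 t (minn l j)) (fun l => nth 0 t (maxn l j.+1))).2 HIJ.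
  apply/sat_fexN; exists (tup_env x (default_env M)).
  apply/sat_bigc => bb; rewrite mem_iota add0n => /andP [_ Hb].
  have Hbs : bb < size (map e t) by rewrite size_map Hsz.
  case: ifP => Hbj.
  - apply/(blk_sem Hm _ HthM Hbs). rewrite fun_tup (nth_map 0); last by rewrite Hsz.
    apply/He_a.
    have := (Hx (Ordinal Hb)).1 => /=. by rewrite (minn_idPl Hbj).
  - apply/(blk_sem Hm _ HRM Hbs). rewrite fun_tup (nth_map 0); last by rewrite Hsz.
    apply/He_b.
    have := (Hx (Ordinal Hb)).2 => /=. rewrite (maxn_idPl _) //. by rewrite ltnNge Hbj.
have [e' [Hind HEM]] := extract Hm Hsat e.
have F1 : forall i j, i <= j -> ~ exists x : 'I_n -> M, holds theta x (e' j) /\ holds R x (e' i).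
  move=> i j Hij [x [H1 H2]]. move: Hij; rewrite leq_eqVlt => /orP [/eqP Eij|Hlt].
  - subst j. have := HEM 1 chi1 B1 EM1 [:: i] isT erefl. apply.
    apply/sat_fexN; exists (tup_env x (default_env M)); split.
    + apply/(blk_sem Hm _ HthM (isT : 0 < size (map e' [:: i]))). rewrite fun_tup. exact: H1.
    + apply/(blk_sem Hm _ HRM (isT : 0 < size (map e' [:: i]))). rewrite fun_tup. exact: H2.
  - have Hs : sorted ltn [:: i; j] by rewrite /= Hlt.
    have := HEM 2 chi2 B2 EM2 [:: i; j] Hs erefl. apply.
    apply/sat_fexN; exists (tup_env x (default_env M)); split.
    + apply/(blk_sem Hm _ HthM (isT : 1 < size (map e' [:: i; j]))). rewrite fun_tup. exact: H1.
    + apply/(blk_sem Hm _ HRM (isT : 0 < size (map e' [:: i; j]))). rewrite fun_tup. exact: H2.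
have F2 : forall j K, j < K -> exists x : 'I_n -> M,
    (forall i, i <= j -> holds theta x (e' i)) /\ (forall i, j < i -> i <= K -> holds R x (e' i)).
  move=> j K HjK.
  have := HEM K.+1 (chi3 j K) (B3 j K) (EM3 j K HjK) (iota 0 K.+1) (iota_ltn_sorted 0 K.+1) (size_iota _ _).
  move=> /sat_fexN [w /sat_bigc Hw]. exists (fun o => w o).
  have Hsz : forall i, i <= K -> i < size (map e' (iota 0 K.+1)) by move=> i Hi; rewrite size_map size_iota.
  have Hnth : forall i, i <= K -> nth (@dtup L M m) (map e' (iota 0 K.+1)) i = e' i.
    move=> i Hi; rewrite (nth_map 0) ?size_iota // nth_iota //.
  have Hin : forall i, i <= K -> i \in iota 0 K.+1 by move=> i Hi; rewrite mem_iota add0n ltnS Hi.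
  split => i Hi.
  - have HiK : i <= K by apply: leq_trans Hi (ltnW HjK).
    have := Hw i (Hin i HiK). rewrite Hi => /(blk_sem Hm _ HthM (Hsz i HiK)). by rewrite Hnth.
  - move=> HiK.
    have := Hw i (Hin i HiK). rewrite leqNgt Hi /= => /(blk_sem Hm _ HRM (Hsz i HiK)). by rewrite Hnth.
have Hc : forall j, exists c : 'I_n -> M,
    (forall i, i <= j -> holds theta c (e' i)) /\ (forall i, j < i -> holds R c (e' i)).
  move=> j.
  pose Sigma chi := exists i, (i <= j /\ chi = blockf n m i theta) \/ (j < i /\ chi = blockf n m i R).
  have [c Hcs] : exists c : 'I_n -> M, forall chi, Sigma chi -> sat (tup_env c (seq_env Hm e')) chi.
    apply: Hsat => r chis Hch.
    have [idx Hidx] := functional_choice _ Hch.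
    pose K := maxn j.+1 (\max_(l < r) idx l).
    have [x [Hx1 Hx2]] := F2 j K (leq_maxl _ _).
    exists x => l. case: (Hidx l) => [[Hl ->]|[Hl ->]]; apply/(blockf_sem Hm) => //.
    + exact: Hx1.
    + apply: Hx2 => //. exact: leq_trans (leq_bigmax l) (leq_maxr _ _).
  exists c; split => i Hi.
  - apply/(blockf_sem Hm e' i c HthM). apply: Hcs; exists i; left; split => //.
  - apply/(blockf_sem Hm e' i c HRM). apply: Hcs; exists i; right; split => //.
have [c Hcp] := functional_choice _ Hc.
exists (fand R (fneg theta)), e', c; split.
- split => //.
- exact: Hind.
- move=> [x [w [[H1 H2] [H3 H4]]]]. exact: H4 H1.
- split => i j Hij.
  + split; first exact: (Hcp j).1 i Hij.
    move=> HR. apply: (F1 i j Hij); exists (c j); split; [exact: (Hcp j).1 j (leqnn j) | exact: HR].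
  + split; first exact: (Hcp j).2 i Hij.
    move=> Hth'. apply: (F1 j.+1 i Hij); exists (c j); split; [exact: Hth' | exact: (Hcp j).2 j.+1 (ltnSn j)].
- move=> i j Hij [x [[H1 _] [H3 _]]]. apply: (F1 i j (ltnW Hij)); exists x; split; [exact: H1|exact: H3].
Qed.
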